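(* For integers $m,l\ge0$ let $B_{ml}=ML^{m+1}\hat L^{-l}+(-1)^{l+m}\hat L^{-l}L^mML$ and $\hat B_{ml}=L^m\hat L^{-l+1}\hat M+(-1)^{l+m}\hat L\hat M\hat L^{-l}L^m$. Then $$B_{ml}^*=-DB_{ml}D^{-1},\qquad \hat B_{ml}^*=-D\hat B_{ml}D^{-1}.$$
   Context: $D=d/dx$; pseudo-differential operators multiply via $D^i f=\sum_{r\ge0}\binom{i}{r}D^r(f)D^{i-r}$; for $A=\sum_if_iD^i$, $A^*=\sum_i(-D)^if_i$. Two-component BKP hierarchy: dressing operators $\Phi=1+\sum_{i\ge1}a_iD^{-i}$, $\hat\Phi=1+\sum_{i\ge1}b_iD^i$ depending on $t=(t_1,t_3,\dots)$, $\hat t=(\hat t_1,\hat t_3,\dots)$, $t_1=x$, with $\Phi^*=D\Phi^{-1}D^{-1}$, $\hat\Phi^*=D\hat\Phi^{-1}D^{-1}$; Lax operators $L=\Phi D\Phi^{-1}$, $\hat L=\hat\Phi D^{-1}\hat\Phi^{-1}$ (so $L^*=-DLD^{-1}$, $\hat L^*=-D\hat LD^{-1}$); Orlov–Schulman operators $M=\Phi\Gamma\Phi^{-1}$, $\hat M=\hat\Phi\hat\Gamma\hat\Phi^{-1}$ with $\Gamma=\sum_{k\ \mathrm{odd}}kt_kD^{k-1}$, $\hat\Gamma=x+\sum_{k\ \mathrm{odd}}k\hat t_kD^{-k-1}$. *)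

(* Defs.v *)
(* Abstract algebra of (two-sided, formal) pseudo-differential
   operators in which all products used by the paper are defined. *)
From HB Require Import structures.
From mathcomp Require Import all_boot all_order all_algebra.
Set Implicit Arguments. Unset Strict Implicit. Unset Printing Implicit Defensive.
Import Order.TTheory GRing.Theory Num.Theory.
Local Open Scope ring_scope.

(* A setting for pseudo-differential operators:
   - [coef] : commutative ring of coefficient functions, with d/dx = [fderiv];
   - [op]   : associative algebra of operators, functions embedded by [fn];
   - [Dx]   : the invertible operator D, with D f = f D + f';
   - [oadj]  : the formal adjoint A |-> A^*, an additive anti-involution with
              f^* = f and D^* = -D  (so (f D^i)^* = (-D)^i f);
   - [osum] : formal infinite sums sum_i F i of operators, with which the
              adjoint commutes (the adjoint is defined termwise). *)
Record psido_setting := PsiDO {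
  coef : comNzRingType;
  fderiv : coef -> coef;
  deriv_add : forall f g, fderiv (f + g) = fderiv f + fderiv g;
  deriv_mul : forall f g, fderiv (f * g) = fderiv f * g + f * fderiv g;
  op : unitRingType;
  fn : {rmorphism coef -> op};
  Dx : op;
  Dx_unit : Dx \is a GRing.unit;
  Dx_fn : forall f, Dx * fn f = fn f * Dx + fn (fderiv f);
  oadj : op -> op;
  adjD : forall a b, oadj (a + b) = oadj a + oadj b;
  adjM : forall a b, oadj (a * b) = oadj b * oadj a;
  adjK : involutive oadj;
  adj_fn : forall f, oadj (fn f) = fn f;
  adj_Dx : oadj Dx = - Dx;
  osum : (nat -> op) -> op;
  adj_osum : forall F, oadj (osum F) = osum (fun i => oadj (F i));
}.

Section Ops.
Variable S : psido_setting.

(* Phi = 1 + sum_{i>=1} a_i D^{-i};  (a i) stands for a_{i+1} *)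
Definition dressing (a : nat -> coef S) : op S :=
  1 + osum (fun i => fn S (a i) * (Dx S) ^- i.+1).

(* hat Phi = 1 + sum_{i>=1} b_i D^i;  (b i) stands for b_{i+1} *)
Definition hdressing (b : nat -> coef S) : op S :=
  1 + osum (fun i => fn S (b i) * (Dx S) ^+ i.+1).

(* Gamma = sum_{k odd} k t_k D^{k-1};  (t j) stands for t_{2j+1}, t 0 = x *)
Definition Gamma (t : nat -> coef S) : op S :=
  osum (fun j => fn S ((2 * j + 1)%:R * t j) * (Dx S) ^+ (2 * j)).

(* hat Gamma = x + sum_{k odd} k hat t_k D^{-k-1};  (th j) = hat t_{2j+1} *)
Definition hGamma (x : coef S) (th : nat -> coef S) : op S :=
  fn S x + osum (fun j => fn S ((2 * j + 1)%:R * th j) * (Dx S) ^- (2 * j + 2)).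

Definition LaxL (Phi : op S) : op S := Phi * Dx S * Phi^-1.
Definition LaxLh (Phih : op S) : op S := Phih * (Dx S)^-1 * Phih^-1.
Definition OSM (Phi G : op S) : op S := Phi * G * Phi^-1.

Definition Bml (L Lh M : op S) (m l : nat) : op S :=
  M * L ^+ (m + 1) * Lh ^ (- (l%:Z)) +
  (-1) ^+ (l + m) * Lh ^ (- (l%:Z)) * L ^+ m * M * L.

Definition hBml (L Lh Mh : op S) (m l : nat) : op S :=
  L ^+ m * Lh ^ (1 - l%:Z) * Mh +
  (-1) ^+ (l + m) * Lh * Mh * Lh ^ (- (l%:Z)) * L ^+ m.

End Ops.

(* Main.v *)
Require Import Defs.
From HB Require Import structures.
From mathcomp Require Import all_boot all_order all_algebra.
From Stdlib Require Import FunctionalExtensionality.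
Import Order.TTheory GRing.Theory Num.Theory.
Local Open Scope ring_scope.

Ltac simp := rewrite ?mul1r ?mulr1 ?mulN1r ?mulrN1 ?mulNr ?mulrN ?opprK ?mulrA ?divrK ?mulrK ?mul1r ?mulN1r ?opprK //.

Section Aux.
Variable S : psido_setting.
Local Notation D := (Dx S).
Local Notation adj := (@oadj S).

Lemma adj0 : adj 0 = 0.
Proof. by apply/(@addrI _ (adj 0)); rewrite -adjD !addr0. Qed.

Lemma adjN x : adj (- x) = - adj x.
Proof. by apply/(@addrI _ (adj x)); rewrite -adjD !subrr adj0. Qed.

Lemma adj1 : adj 1 = 1.
Proof. by rewrite -(rmorph1 (fn S)) adj_fn. Qed.

Lemma adj_sign n : adj ((-1) ^+ n) = (-1) ^+ n.
Proof.
elim: n => [|n IH]; first by rewrite expr0 adj1.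
by rewrite exprS adjM IH adjN adj1 mulrN1 mulN1r.
Qed.

Lemma adj_inv x : x \is a GRing.unit ->
  adj x \is a GRing.unit /\ adj (x^-1) = (adj x)^-1.
Proof.
move=> ux.
have h1 : adj (x^-1) * adj x = 1 by rewrite -adjM mulrV // adj1.
have h2 : adj x * adj (x^-1) = 1 by rewrite -adjM mulVr // adj1.
have u : adj x \is a GRing.unit by apply/unitrP; exists (adj x^-1).
split => //.
by rewrite -[LHS]mulr1 -(mulrV u) mulrA h1 mul1r.
Qed.

Lemma unitD : D \is a GRing.unit. Proof. exact: Dx_unit. Qed.

Definition Q (k : nat) (x : op S) := adj x = (-1) ^+ k * (D * x * D^-1).

Lemma sign_cases n : ((-1) ^+ n : op S) = 1 \/ ((-1) ^+ n : op S) = -1.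
Proof. rewrite -signr_odd; case: (odd n); rewrite ?expr0 ?expr1; by [left|right]. Qed.


Lemma Q_mul i j x y : Q i x -> Q j y ->
  adj (x * y) = (-1) ^+ (i + j) * (D * (y * x) * D^-1).
Proof.
rewrite /Q => hx hy; rewrite adjM hx hy exprD.
have uD := unitD.
case: (sign_cases i) => ->; case: (sign_cases j) => ->; simp. all: by [].
Qed.

Lemma Q_exp i x n : Q i x -> Q (i * n) (x ^+ n).
Proof.
move=> hx; elim: n => [|n IH].
  by rewrite /Q !expr0 adj1 muln0 expr0 mul1r mulr1 mulrV // unitD.
by rewrite /Q exprS (Q_mul _ _ _ _ hx IH) -exprSr -exprS mulnS.
Qed.

Lemma Q_inv i x : x \is a GRing.unit -> Q i x -> Q i (x^-1).
Proof.
move=> ux hx; have [u e] := adj_inv x ux; rewrite /Q e hx.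
have uD := unitD.
have uDx : D * x \is a GRing.unit by rewrite unitrMr.
case: (sign_cases i) => ->; rewrite ?mul1r ?mulN1r ?invrN.
all: by rewrite (invrM uDx) ?unitrV // invrK (invrM uD ux) mulrA.
Qed.

Lemma Q_negz i x l : x \is a GRing.unit -> Q i x -> Q (i * l) (x ^ (- (l%:Z))).
Proof.
move=> ux hx; rewrite -invr_expz; apply: Q_inv.
  by rewrite unitrX.
exact: Q_exp.
Qed.

Lemma combo1 k X A A' :
  Q 1 X -> adj A = (-1) ^+ k * (D * A' * D^-1) ->
  adj A' = (-1) ^+ k * (D * A * D^-1) ->
  adj (X * A + (-1) ^+ k * A' * X) = - (D * (X * A + (-1) ^+ k * A' * X) * D^-1).
Proof.
rewrite /Q expr1 => hX hA hA'.
have uD := unitD.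
rewrite adjD !adjM adj_sign hX hA hA'.
case: (sign_cases k) => ->; simp; rewrite ?mulrDr ?mulrDl ?opprD; simp.
  by rewrite addrC.
by rewrite mulNr opprK addrC.
Qed.

Lemma combo2 k X A A' :
  Q 1 X -> adj A = (-1) ^+ k * (D * A' * D^-1) ->
  adj A' = (-1) ^+ k * (D * A * D^-1) ->
  adj (A * X + (-1) ^+ k * X * A') = - (D * (A * X + (-1) ^+ k * X * A') * D^-1).
Proof.
rewrite /Q expr1 => hX hA hA'.
have uD := unitD.
rewrite adjD !adjM adj_sign hX hA hA'.
case: (sign_cases k) => ->; simp; rewrite ?mulrDr ?mulrDl ?opprD; simp.
  by rewrite addrC.
by rewrite mulNr opprK addrC.
Qed.

Lemma fd0 : fderiv (0 : coef S) = 0.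
Proof. by apply/(@addrI _ (fderiv 0)); rewrite -deriv_add !addr0. Qed.

Lemma fd1 : fderiv (1 : coef S) = 0.
Proof.
have h := deriv_mul (1 : coef S) 1; rewrite mul1r mulr1 mul1r in h.
by apply/(@addrI _ (fderiv (1 : coef S))); rewrite -h addr0.
Qed.

Lemma fdn n : fderiv (n%:R : coef S) = 0.
Proof. by elim: n => [|n IH]; rewrite ?fd0 // mulrS deriv_add fd1 IH addr0. Qed.

Lemma fd_nc n (f : coef S) : fderiv f = 0 -> fderiv (n%:R * f) = 0.
Proof. by move=> h; rewrite deriv_mul fdn h mul0r mulr0 addr0. Qed.

Lemma comm_const (f : coef S) : fderiv f = 0 -> GRing.comm D (fn S f).
Proof. by move=> h; rewrite /GRing.comm Dx_fn h rmorph0 addr0. Qed.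

Lemma adjX x n : adj (x ^+ n) = (adj x) ^+ n.
Proof. by elim: n => [|n IH]; rewrite ?expr0 ?adj1 // exprS adjM IH -exprSr. Qed.

Lemma adj_even_pow n : adj (D ^+ (2 * n)) = D ^+ (2 * n).
Proof. by rewrite adjX adj_Dx !exprM sqrrN. Qed.

Lemma adj_dress_inv P : P \is a GRing.unit -> adj P = D * P^-1 * D^-1 ->
  adj (P^-1) = D * P * D^-1.
Proof.
move=> uP hP; have [u ->] := adj_inv P uP; rewrite hP.
have uD := unitD.
have uDx : D * P^-1 \is a GRing.unit by rewrite unitrMr // unitrV.
by rewrite (invrM uDx) ?unitrV // invrK (invrM uD) ?unitrV // invrK mulrA.
Qed.

End Aux.
Local Open Scope ring_scope.

Theorem proposition3p9 (S : psido_setting)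
    (t th : nat -> coef S) (a b : nat -> coef S)
    (hx : fderiv (t 0%N) = 1)
    (ht : forall j, fderiv (t j.+1) = 0)
    (hth : forall j, fderiv (th j) = 0)
    (hPhi : dressing a \is a GRing.unit)
    (hPhih : hdressing b \is a GRing.unit)
    (hPhi_adj : oadj (dressing a) = Dx S * (dressing a)^-1 * (Dx S)^-1)
    (hPhih_adj : oadj (hdressing b) = Dx S * (hdressing b)^-1 * (Dx S)^-1) :
  let L := LaxL (dressing a) in
  let Lh := LaxLh (hdressing b) in
  let M := OSM (dressing a) (Gamma t) in
  let Mh := OSM (hdressing b) (hGamma (t 0%N) th) in
  forall m l : nat,
    oadj (Bml L Lh M m l) = - (Dx S * Bml L Lh M m l * (Dx S)^-1) /\
    oadj (hBml L Lh Mh m l) = - (Dx S * hBml L Lh Mh m l * (Dx S)^-1).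
Proof.
have uD := unitD S.
set P := dressing a in hPhi hPhi_adj *.
set Ph := hdressing b in hPhih hPhih_adj *.
have hG : oadj (Gamma t) = Gamma t.
  rewrite /Gamma adj_osum; congr (osum _); apply: functional_extensionality => j.
  rewrite adjM adj_fn adj_even_pow.
  case: j => [|j]; first by rewrite muln0 expr0 mul1r mulr1.
  by apply/commr_sym/commrX/commr_sym/comm_const/fd_nc.
have hGh : oadj (hGamma (t 0%N) th) = hGamma (t 0%N) th.
  rewrite /hGamma adjD adj_fn adj_osum; congr (_ + osum _).
  apply: functional_extensionality => j.
  have ->: (2 * j + 2 = 2 * j.+1)%N by rewrite mulnS addnC.
  rewrite adjM adj_fn; have [_ ->] := adj_inv S _ (unitrX (2 * j.+1) uD).
  rewrite adj_even_pow.
  by apply/commr_sym/commrV/commrX/commr_sym/comm_const/fd_nc.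
move=> L Lh M Mh m l.
have iP := adj_dress_inv S P hPhi hPhi_adj.
have iPh := adj_dress_inv S Ph hPhih hPhih_adj.
have QL : Q S 1 L.
  rewrite /Q /L /LaxL !adjM iP adj_Dx hPhi_adj.
  by simp; simp.
have QLh : Q S 1 Lh.
  rewrite /Q /Lh /LaxLh !adjM iPh hPhih_adj.
  have [_ ->] := adj_inv S _ uD; rewrite adj_Dx invrN.
  by simp; simp.
have uLh : Lh \is a GRing.unit.
  by rewrite /Lh /LaxLh unitrMl ?unitrV // unitrMl ?unitrV.
have QML : Q S 1 (M * L).
  rewrite /Q /M /L /OSM /LaxL !adjM iP adj_Dx hPhi_adj hG.
  by simp; simp.
have QLM : Q S 1 (Lh * Mh).
  rewrite /Q /Mh /Lh /OSM /LaxLh !adjM iPh hPhih_adj hGh.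
  have [_ ->] := adj_inv S _ uD; rewrite adj_Dx invrN.
  by simp; simp.
have hA : oadj (L ^+ m * Lh ^ (- (l%:Z))) =
    (-1) ^+ (l + m) * (Dx S * (Lh ^ (- (l%:Z)) * L ^+ m) * (Dx S)^-1).
  rewrite (Q_mul S _ _ _ _ (Q_exp S _ _ m QL) (Q_negz S _ _ l uLh QLh)).
  by rewrite !mul1n addnC.
have hA' : oadj (Lh ^ (- (l%:Z)) * L ^+ m) =
    (-1) ^+ (l + m) * (Dx S * (L ^+ m * Lh ^ (- (l%:Z))) * (Dx S)^-1).
  rewrite (Q_mul S _ _ _ _ (Q_negz S _ _ l uLh QLh) (Q_exp S _ _ m QL)).
  by rewrite !mul1n.
split.
  have -> : Bml L Lh M m l = (M * L) * (L ^+ m * Lh ^ (- (l%:Z))) +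
      (-1) ^+ (l + m) * (Lh ^ (- (l%:Z)) * L ^+ m) * (M * L).
    by rewrite /Bml addn1 exprS !mulrA.
  exact: combo1.
have -> : hBml L Lh Mh m l = (L ^+ m * Lh ^ (- (l%:Z))) * (Lh * Mh) +
    (-1) ^+ (l + m) * (Lh * Mh) * (Lh ^ (- (l%:Z)) * L ^+ m).
  by rewrite /hBml [(1 - _)%R]addrC exprzDr // expr1z !mulrA.
exact: combo2.
Qed.
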